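(* Let $Z\subset\mathbb{S}_8$ be a finite nonempty set of points. Then $\alpha(Z)=\alpha(2Z)=1$ if and only if $Z=\{Q\}$ for a single point $Q$ such that $f(Q)$ is the singular point of an irreducible cubic curve $F$ passing through $P_1,\dots,P_8$ and $f(Q)\neq P_i$ for all $i\in\{1,\dots,8\}$.
   Context: Let $P_1,\dots,P_8\in\mathbb{P}^2(\mathbb{C})$ be eight general points and $f\colon\mathbb{S}_8\to\mathbb{P}^2$ the blow-up at them, with exceptional curves $E_i=f^{-1}(P_i)$; let $H$ be the pullback of the class of a line and $\mathbb{L}_8=3H-E_1-\dots-E_8=-K_{\mathbb{S}_8}$. For a finite set $Z\subset\mathbb{S}_8$ with ideal sheaf $\mathcal{I}_Z$ and a positive integer $m$, $\alpha(mZ)=\min\{d\ge 0:\ H^0(\mathbb{S}_8,d\mathbb{L}_8\otimes\mathcal{I}_Z^{(m)})\neq 0\}$, i.e. the least $d$ such that some effective divisor $D\in|d\mathbb{L}_8|$ has multiplicity at least $m$ at every point of $Z$. *)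

(* Defs.v *)
From HB Require Import structures.
From mathcomp Require Import all_boot all_algebra.
From mathcomp Require Import Rstruct.
From mathcomp Require Import complex.
From mathcomp Require Import mpoly.

Set Implicit Arguments.
Unset Strict Implicit.
Unset Printing Implicit Defensive.

Import GRing.Theory.
Local Open Scope ring_scope.

Definition C : numClosedFieldType := (Rdefinitions.R)[i].

(* homogeneous coordinates: vectors of C^3 *)
Definition vec := 'I_3 -> C.

Definition i0 : 'I_3 := @Ordinal 3 0 isT.
Definition i1 : 'I_3 := @Ordinal 3 1 isT.
Definition i2 : 'I_3 := @Ordinal 3 2 isT.

Definition nz (v : vec) : Prop := exists k, v k != 0.

Definition proj_eq (p q : vec) : Prop :=
  exists c : C, c != 0 /\ forall k, q k = c * p k.

Definition det3 (a b c : vec) : C :=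
  a i0 * (b i1 * c i2 - b i2 * c i1)
  - a i1 * (b i0 * c i2 - b i2 * c i0)
  + a i2 * (b i0 * c i1 - b i1 * c i0).

(* affine chart of P^2 centred at [a]:  (x,y) |-> [a + x w + y u],
   for (a,w,u) a basis of C^3 *)
Definition chart (a w u : vec) : 3.-tuple {mpoly C[2]} :=
  [tuple (a k)%:MP + w k *: 'X_0 + u k *: 'X_1 | k < 3].

(* chart of the blow-up of P^2 at [a] around the point of the exceptional
   curve corresponding to the tangent direction w:
   (s,t) |-> (x,y) = (s, s t) |-> [a + s w + s t u] *)
Definition bchart (a w u : vec) : 3.-tuple {mpoly C[2]} :=
  [tuple (a k)%:MP + w k *: 'X_0 + u k *: ('X_0 * 'X_1) | k < 3].

Definition ord_ge (G : {mpoly C[2]}) (m : nat) : Prop :=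
  forall mon : 'X_{1..2}, (mdeg mon < m)%N -> G@_mon = 0.

Definition pmult_ge (F : {mpoly C[3]}) (p : vec) (m : nat) : Prop :=
  forall w u : vec, det3 p w u != 0 -> ord_ge (comp_mpoly (chart p w u) F) m.

(* Points of S_8 (P = the 8 blown-up points):
   Off p   : the point f^{-1}([p]), [p] different from all [P i];
   Exc i w : the point of E_i = f^{-1}(P_i) given by the tangent direction
             of the line through [P i] and [w]. *)
Inductive spt : Type :=
| Off of vec
| Exc of 'I_8 & vec.

Definition valid_pt (P : 'I_8 -> vec) (q : spt) : Prop :=
  match q with
  | Off p => nz p /\ forall i, ~ proj_eq (P i) p
  | Exc i w => ~ exists c : C, forall k, w k = c * P i k
  end.

Definition pt_eq (P : 'I_8 -> vec) (q1 q2 : spt) : Prop :=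
  match q1, q2 with
  | Off p, Off p' => proj_eq p p'
  | Exc i w, Exc j v =>
      i = j /\ exists a b : C, a != 0 /\ forall k, v k = a * w k + b * P i k
  | _, _ => False
  end.

Definition fpt (P : 'I_8 -> vec) (q : spt) : vec :=
  match q with Off p => p | Exc i _ => P i end.

(* Elements of H^0(S_8, d L_8) up to scalars = effective divisors D in |d L_8|:
   D = f^*(F = 0) - d (E_1 + ... + E_8) with F a nonzero form of degree 3d
   having multiplicity >= d at every P_i. *)
Definition section (P : 'I_8 -> vec) (d : nat) (F : {mpoly C[3]}) : Prop :=
  F \is (3 * d)%N.-homog /\ F != 0 /\ forall i, pmult_ge F (P i) d.

(* At a point of E_i, D is locally  G(s,t) / s^d  with G = F o bchart, and
   G is divisible by s^d; ord(G / s^d) >= m  iff  ord(G) >= m + d. *)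
Definition smult_ge (P : 'I_8 -> vec) (d : nat) (F : {mpoly C[3]})
    (q : spt) (m : nat) : Prop :=
  match q with
  | Off p => pmult_ge F p m
  | Exc i w => forall u : vec, det3 (P i) w u != 0 ->
                 ord_ge (comp_mpoly (bchart (P i) w u) F) (m + d)
  end.

(* H^0(S_8, d L_8 (x) I_Z^(m)) <> 0 *)
Definition has_curve (P : 'I_8 -> vec) (d m : nat) (Z : seq spt) : Prop :=
  exists F, section P d F /\ forall q, List.In q Z -> smult_ge P d F q m.

(* alpha(mZ) = a *)
Definition is_alpha (P : 'I_8 -> vec) (m : nat) (Z : seq spt) (a : nat) : Prop :=
  has_curve P a m Z /\ forall d, (d < a)%N -> ~ has_curve P d m Z.

Definition irreducible_cubic (F : {mpoly C[3]}) : Prop :=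
  F \is 3.-homog /\ F != 0 /\
  forall G H : {mpoly C[3]}, F = G * H -> (msize G <= 1)%N \/ (msize H <= 1)%N.

Definition coords (P : 'I_8 -> vec) : 'I_24 -> C :=
  fun k => P (inord (k %/ 3)) (inord (k %% 3)).

(* Main.v *)
Require Import Defs.
From HB Require Import structures.
From mathcomp Require Import all_boot all_algebra.
From mathcomp Require Import Rstruct complex mpoly.
From mathcomp Require Import ring zify.
From Stdlib Require Import Lia FunctionalExtensionality Classical_Prop.
Set Implicit Arguments. Unset Strict Implicit. Unset Printing Implicit Defensive.
Import GRing.Theory.
Local Open Scope ring_scope.

Section Gen.
Variable n : nat.
Implicit Types p q : {mpoly C[n]}.

Lemma gen_ind (P : {mpoly C[n]} -> Prop) :
  (forall c, P c%:MP) -> (forall i, P 'X_i) ->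
  (forall p q, P p -> P q -> P (p + q)) -> (forall p q, P p -> P q -> P (p * q)) ->
  forall p, P p.
Proof.
move=> hC hX hD hM.
have h1 : P 1 by rewrite -mpolyC1.
have hXm : forall m, P 'X_[m].
  move=> m; rewrite mpolyXE_id; apply: big_ind => // i _.
  elim: (m i) => [|k ih]; first by rewrite expr0.
  by rewrite exprS; apply: hM.
elim/mpolyind => [|c m p _ _ hp]; first by rewrite -mpolyC0.
by apply: hD => //; rewrite -mul_mpolyC; apply: hM.
Qed.

Lemma mderivXU (i j : 'I_n) : mderiv j ('X_i : {mpoly C[n]}) = (i == j)%:R%:MP.
Proof.
rewrite mderivX mnm1E.
have [->|ne] := eqVneq i j.
  have -> : (U_(j) - U_(j))%MM = 0%MM by apply/mnmP => l; rewrite mnmBE subnn mnm0E.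
  by rewrite mpolyX0 scale1r mpolyC1.
by rewrite scale0r mpolyC0.
Qed.
End Gen.

Lemma comp_mpolyM' (n k : nat) (t : n.-tuple {mpoly C[k]}) (p q : {mpoly C[n]}) :
  (p * q) \mPo t = (p \mPo t) * (q \mPo t).
Proof. exact: (comp_mpoly_is_multiplicative t).1. Qed.

Lemma mderiv_comp (n k : nat) (t : n.-tuple {mpoly C[k]}) (i : 'I_k) (p : {mpoly C[n]}) :
  mderiv i (p \mPo t) = \sum_(j < n) mderiv i (tnth t j) * (mderiv j p \mPo t).
Proof.
elim/gen_ind: p => [c|l|p q hp hq|p q hp hq].
- rewrite comp_mpolyC mderivC. rewrite big1 // => j _. rewrite mderivC comp_mpoly0 mulr0 //.
- rewrite comp_mpolyXU -tnth_nth (bigD1 l) //= big1 ?addr0.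
    by rewrite (mderivXU l l) eqxx comp_mpolyC mpolyC1 mulr1.
  by move=> j /negbTE ne; rewrite (mderivXU l j) eq_sym ne mpolyC0 comp_mpoly0 mulr0.
- rewrite comp_mpolyD (mderivD i (p \mPo t)) [in X in X + _]hp.
  rewrite [mderiv i (q \mPo t)]hq -big_split /=.
  apply: eq_bigr => j _.
  by rewrite (mderivD j p) comp_mpolyD mulrDr.
- rewrite comp_mpolyM' (mderivM i (p \mPo t)) [in X in X * _]hp [mderiv i (q \mPo t)]hq.
  rewrite mulr_suml mulr_sumr -big_split /=.
  apply: eq_bigr => j _.
  rewrite (mderivM j p) comp_mpolyD !comp_mpolyM'.
  move: (mderiv i (tnth t j)) (mderiv j p \mPo t) (mderiv j q \mPo t) (p \mPo t) (q \mPo t) => a b c d e.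
  ring.
Qed.

Lemma mcoeff0_meval (n : nat) (p : {mpoly C[n]}) : p@_0 = p.@[fun _ => 0].
Proof.
elim/gen_ind: p => [c|l|p q hp hq|p q hp hq].
- by rewrite mcoeffC eqxx mulr1 mevalC.
- by rewrite mcoeffX mevalXU; case: eqP => // /mnmP /(_ l); rewrite mnm1E eqxx mnm0E.
- by rewrite mcoeffD mevalD hp hq.
- by rewrite (mcoeff0_is_multiplicative _ _).1 mevalM hp hq.
Qed.

Lemma mcoeffU_deriv (n : nat) (p : {mpoly C[n]}) (j : 'I_n) : p@_(U_(j)) = (mderiv j p)@_0.
Proof. by rewrite mcoeff_mderiv add0m mnm0E mulr1n. Qed.

Lemma mcoeffUU_deriv (n : nat) (p : {mpoly C[n]}) (j l : 'I_n) : j != l ->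
  p@_(U_(j) + U_(l)) = (mderiv l (mderiv j p))@_0.
Proof.
move=> ne; rewrite mcoeff_mderiv add0m mnm0E mulr1n mcoeff_mderiv mnm1E.
by rewrite eq_sym (negbTE ne) mulr1n addmC.
Qed.
Definition mk3 (a b c : nat) : 'X_{1..3} := [multinom [tuple a; b; c]].
Definition ms1 := [:: mk3 1 0 0; mk3 0 1 0; mk3 0 0 1].
Definition ms2 := [:: mk3 2 0 0; mk3 0 2 0; mk3 0 0 2; mk3 1 1 0; mk3 0 1 1; mk3 1 0 1].
Definition ms3 := [:: mk3 3 0 0; mk3 2 1 0; mk3 2 0 1; mk3 1 2 0; mk3 1 1 1;
                      mk3 1 0 2; mk3 0 3 0; mk3 0 2 1; mk3 0 1 2; mk3 0 0 3].

Lemma ord3P (P : 'I_3 -> Prop) : P i0 -> P i1 -> P i2 -> forall i, P i.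
Proof.
move=> h0 h1 h2 [[|[|[|//]]] hi].
- by have -> : Ordinal hi = i0 by apply: val_inj.
- by have -> : Ordinal hi = i1 by apply: val_inj.
- by have -> : Ordinal hi = i2 by apply: val_inj.
Qed.

Lemma sum3 (R : ringType) (f : 'I_3 -> R) : \sum_(i < 3) f i = f i0 + f i1 + f i2.
Proof. rewrite !big_ord_recr big_ord0 /= GRing.add0r; congr (f _ + f _ + f _); exact: val_inj. Qed.
Lemma prod3 (R : ringType) (f : 'I_3 -> R) : \prod_(i < 3) f i = f i0 * f i1 * f i2.
Proof. rewrite !big_ord_recr big_ord0 /= GRing.mul1r; congr (f _ * f _ * f _); exact: val_inj. Qed.
Lemma sum3n (f : 'I_3 -> nat) : (\sum_(i < 3) f i = f i0 + f i1 + f i2)%N.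
Proof. rewrite !big_ord_recr big_ord0 /= add0n; congr (f _ + f _ + f _)%N; exact: val_inj. Qed.

Lemma mk3_eta (m : 'X_{1..3}) : m = mk3 (m i0) (m i1) (m i2).
Proof. by apply/mnmP; apply: ord3P. Qed.

Lemma mdeg3 (m : 'X_{1..3}) : mdeg m = (m i0 + m i1 + m i2)%N.
Proof. by rewrite mdegE sum3n. Qed.

Lemma ms3_cover m : mdeg m = 3%N -> m \in ms3.
Proof.
move=> h; rewrite (mk3_eta m); move: h; rewrite mdeg3; move: (m i0) (m i1) (m i2) => a b c /eqP.
by case: a => [|[|[|[|a]]]]; case: b => [|[|[|[|b]]]]; case: c => [|[|[|[|c]]]].
Qed.
Lemma ms2_cover m : mdeg m = 2%N -> m \in ms2.
Proof.
move=> h; rewrite (mk3_eta m); move: h; rewrite mdeg3; move: (m i0) (m i1) (m i2) => a b c /eqP.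
by case: a => [|[|[|a]]]; case: b => [|[|[|b]]]; case: c => [|[|[|c]]].
Qed.
Lemma ms1_cover m : mdeg m = 1%N -> m \in ms1.
Proof.
move=> h; rewrite (mk3_eta m); move: h; rewrite mdeg3; move: (m i0) (m i1) (m i2) => a b c /eqP.
by case: a => [|[|a]]; case: b => [|[|b]]; case: c => [|[|c]].
Qed.
Lemma ms3_uniq : uniq ms3. Proof. by []. Qed.
Lemma ms2_uniq : uniq ms2. Proof. by []. Qed.
Lemma ms1_uniq : uniq ms1. Proof. by []. Qed.
Lemma mcoeff_sumX ms (c : 'X_{1..3} -> C) m : uniq ms ->
  (\sum_(m' <- ms) (c m')%:MP * 'X_[m'] : {mpoly C[3]})@_m = if m \in ms then c m else 0.
Proof.
move=> u; rewrite raddf_sum /=.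
rewrite (eq_bigr (fun m' => c m' * (m' == m)%:R)); last by move=> m' _; rewrite mcoeffCM mcoeffX.
case: ifP => hm.
  rewrite (bigD1_seq m) //= eqxx mulr1 big1 ?addr0 // => m' /negbTE ne; by rewrite ne mulr0.
rewrite big_seq big1 // => m' hm'; case: eqP => [e|]; last by rewrite mulr0.
by move: hm; rewrite -e hm'.
Qed.

Lemma decomp (F : {mpoly C[3]}) d ms : uniq ms -> (forall m, mdeg m = d -> m \in ms) ->
  F \is d.-homog -> F = \sum_(m <- ms) (F@_m)%:MP * 'X_[m].
Proof.
move=> u cov h; apply/mpolyP => m; rewrite mcoeff_sumX //; case: ifP => // hm.
apply: (dhomog_nemf_coeff h); apply/eqP => e; by rewrite cov in hm.
Qed.

Definition mono (R : comRingType) (m : 'X_{1..3}) (y : 'I_3 -> R) : R :=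
  y i0 ^+ m i0 * y i1 ^+ m i1 * y i2 ^+ m i2.
Definition evm (R : comRingType) ms (c : 'X_{1..3} -> R) (y : 'I_3 -> R) : R :=
  \sum_(m <- ms) c m * mono m y.
Definition grm (R : comRingType) ms (c : 'X_{1..3} -> R) (k : 'I_3) (y : 'I_3 -> R) : R :=
  \sum_(m <- ms) c m * (m k)%:R * mono (m - U_(k))%MM y.

Lemma meval_sumX ms (c : 'X_{1..3} -> C) x :
  meval x (\sum_(m <- ms) (c m)%:MP * 'X_[m]) = evm ms c x.
Proof.
rewrite (big_morph (meval x) (mevalD x) (meval0 x)); apply: eq_bigr => m _.
by rewrite mevalM mevalC mevalX prod3.
Qed.

Lemma comp_sumX k ms (c : 'X_{1..3} -> C) (T : 3.-tuple {mpoly C[k]}) :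
  (\sum_(m <- ms) (c m)%:MP * 'X_[m]) \mPo T = evm ms (fun m => (c m)%:MP) (tnth T).
Proof.
rewrite (big_morph (comp_mpoly T) (comp_mpolyD T) (comp_mpoly0 T)); apply: eq_bigr => m _.
by rewrite comp_mpolyM' comp_mpolyC comp_mpolyX prod3.
Qed.

Lemma meval_deriv_sumX ms (c : 'X_{1..3} -> C) k x :
  meval x (mderiv k (\sum_(m <- ms) (c m)%:MP * 'X_[m])) = grm ms c k x.
Proof.
rewrite (big_morph (mderiv k) (mderivD k) (mderiv0 _ k)).
rewrite (big_morph (meval x) (mevalD x) (meval0 x)); apply: eq_bigr => m _.
rewrite mderiv_mulC mderivX mevalM mevalC -mul_mpolyC mevalM mevalX prod3 mevalC.
by rewrite mulrA.
Qed.

Lemma mk3_0 a b c : mk3 a b c i0 = a. Proof. by []. Qed.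
Lemma mk3_1 a b c : mk3 a b c i1 = b. Proof. by []. Qed.
Lemma mk3_2 a b c : mk3 a b c i2 = c. Proof. by []. Qed.
Lemma mk3_sub0 a b c : (mk3 a b c - U_(i0))%MM = mk3 a.-1 b c.
Proof. by apply/mnmP; apply: ord3P; rewrite mnmBE mnm1E /= ?subn0 ?subn1. Qed.
Lemma mk3_sub1 a b c : (mk3 a b c - U_(i1))%MM = mk3 a b.-1 c.
Proof. by apply/mnmP; apply: ord3P; rewrite mnmBE mnm1E /= ?subn0 ?subn1. Qed.
Lemma mk3_sub2 a b c : (mk3 a b c - U_(i2))%MM = mk3 a b c.-1.
Proof. by apply/mnmP; apply: ord3P; rewrite mnmBE mnm1E /= ?subn0 ?subn1. Qed.
Lemma mono_mk3 (R : comRingType) a b c (y : 'I_3 -> R) :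
  mono (mk3 a b c) y = y i0 ^+ a * y i1 ^+ b * y i2 ^+ c.
Proof. by []. Qed.

Ltac expl := rewrite /evm /grm ?big_cons ?big_nil ?mk3_sub0 ?mk3_sub1 ?mk3_sub2 ?mono_mk3 ?mk3_0 ?mk3_1 ?mk3_2 /=.

Goal forall (R : comRingType) (c : 'X_{1..3} -> R) y,
  y i0 * grm ms3 c i0 y + y i1 * grm ms3 c i1 y + y i2 * grm ms3 c i2 y = 3%:R * evm ms3 c y.
move=> R c y. expl. ring.
Qed.
Definition j0 : 'I_2 := 0.
Definition j1 : 'I_2 := 1.
Notation zero2 := (fun _ : 'I_2 => (0 : C)).

Lemma tchart a w u k : tnth (chart a w u) k = (a k)%:MP + (w k)%:MP * 'X_j0 + (u k)%:MP * 'X_j1.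
Proof. by rewrite tnth_mktuple !mul_mpolyC. Qed.
Lemma tbchart a w u k :
  tnth (bchart a w u) k = (a k)%:MP + (w k)%:MP * 'X_j0 + (u k)%:MP * ('X_j0 * 'X_j1).
Proof. by rewrite tnth_mktuple !mul_mpolyC. Qed.

Lemma meval_mpolyX_zero (j : 'I_2) : meval zero2 'X_j = 0.
Proof. by rewrite mevalXU. Qed.

Lemma tchart0 a w u k : meval zero2 (tnth (chart a w u) k) = a k.
Proof. by rewrite tchart !mevalD !mevalM !mevalC !meval_mpolyX_zero !mulr0 !addr0. Qed.
Lemma tbchart0 a w u k : meval zero2 (tnth (bchart a w u) k) = a k.
Proof. by rewrite tbchart !mevalD !mevalM !mevalC !meval_mpolyX_zero !mulr0 !addr0. Qed.

Lemma dXj0 : mderiv j0 ('X_j0 : {mpoly C[2]}) = 1.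
Proof. by rewrite mderivXU eqxx mpolyC1. Qed.
Lemma dXj1 : mderiv j1 ('X_j1 : {mpoly C[2]}) = 1.
Proof. by rewrite mderivXU eqxx mpolyC1. Qed.
Lemma dXj01 : mderiv j1 ('X_j0 : {mpoly C[2]}) = 0.
Proof. by rewrite mderivXU /= mpolyC0. Qed.
Lemma dXj10 : mderiv j0 ('X_j1 : {mpoly C[2]}) = 0.
Proof. by rewrite mderivXU /= mpolyC0. Qed.

Lemma dtchart0 a w u k : mderiv j0 (tnth (chart a w u) k) = (w k)%:MP.
Proof.
rewrite tchart !mderivD !mderiv_mulC mderivC dXj0 dXj10.
by rewrite mulr0 mulr1 addr0 add0r.
Qed.
Lemma dtchart1 a w u k : mderiv j1 (tnth (chart a w u) k) = (u k)%:MP.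
Proof.
rewrite tchart !mderivD !mderiv_mulC mderivC dXj1 dXj01.
by rewrite mulr0 mulr1 addr0 add0r.
Qed.
Lemma dtbchart0 a w u k : mderiv j0 (tnth (bchart a w u) k) = (w k)%:MP + (u k)%:MP * 'X_j1.
Proof.
rewrite tbchart !mderivD !mderiv_mulC mderivC (mderivM j0 'X_j0) dXj0 dXj10.
by rewrite mulr0 mulr1 addr0 add0r mul1r.
Qed.
Lemma dtbchart1 a w u k : mderiv j1 (tnth (bchart a w u) k) = (u k)%:MP * 'X_j0.
Proof.
rewrite tbchart !mderivD !mderiv_mulC mderivC (mderivM j1 'X_j0) dXj1 dXj01.
by rewrite mulr0 mulr1 mul0r !add0r.
Qed.

Lemma chart_c0 F a w u : (F \mPo chart a w u)@_0 = meval a F.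
Proof.
rewrite mcoeff0_meval comp_mpoly_meval; apply: meval_eq => k.
exact: tchart0.
Qed.
Lemma bchart_c0 F a w u : (F \mPo bchart a w u)@_0 = meval a F.
Proof.
rewrite mcoeff0_meval comp_mpoly_meval; apply: meval_eq => k.
exact: tbchart0.
Qed.

Lemma meval_sum3 (k : nat) (v : 'I_k -> C) (f : 'I_3 -> {mpoly C[k]}) :
  meval v (\sum_(j < 3) f j) = \sum_(j < 3) meval v (f j).
Proof. exact: (big_morph (meval v) (mevalD v) (meval0 v)). Qed.

Definition gdot (F : {mpoly C[3]}) (a v : vec) := \sum_(k < 3) v k * meval a (mderiv k F).

Lemma chart_c1 F a w u : (F \mPo chart a w u)@_(U_(j0)) = gdot F a w.
Proof.
rewrite mcoeffU_deriv mderiv_comp mcoeff0_meval.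
rewrite (big_morph (meval zero2) (mevalD zero2) (meval0 zero2)); apply: eq_bigr => k _.
rewrite mevalM dtchart0 mevalC comp_mpoly_meval; congr (_ * _); apply: meval_eq => l.
exact: tchart0.
Qed.
Lemma chart_c2 F a w u : (F \mPo chart a w u)@_(U_(j1)) = gdot F a u.
Proof.
rewrite mcoeffU_deriv mderiv_comp mcoeff0_meval.
rewrite (big_morph (meval zero2) (mevalD zero2) (meval0 zero2)); apply: eq_bigr => k _.
rewrite mevalM dtchart1 mevalC comp_mpoly_meval; congr (_ * _); apply: meval_eq => l.
exact: tchart0.
Qed.
Lemma bchart_c1 F a w u : (F \mPo bchart a w u)@_(U_(j0)) = gdot F a w.
Proof.
rewrite mcoeffU_deriv mderiv_comp mcoeff0_meval.
rewrite (big_morph (meval zero2) (mevalD zero2) (meval0 zero2)); apply: eq_bigr => k _.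
rewrite mevalM dtbchart0 mevalD mevalM !mevalC meval_mpolyX_zero mulr0 addr0.
rewrite comp_mpoly_meval; congr (_ * _); apply: meval_eq => l.
exact: tbchart0.
Qed.
Lemma bchart_c11 F a w u : (F \mPo bchart a w u)@_(U_(j0) + U_(j1)) = gdot F a u.
Proof.
rewrite mcoeffUU_deriv // mderiv_comp mcoeff0_meval.
rewrite (big_morph (mderiv j1) (mderivD j1) (mderiv0 _ j1)).
rewrite raddf_sum /=; apply: eq_bigr => k _.
rewrite dtbchart0 (mderivM j1 ((w k)%:MP + (u k)%:MP * 'X_j1)).
rewrite mderivD mderivC mderiv_mulC dXj1 add0r mulr1.
rewrite mderiv_comp mevalD !mevalM meval_sum3.
rewrite big1; last first.
  by move=> l _; rewrite mevalM dtbchart1 mevalM mevalC meval_mpolyX_zero !mulr0 mul0r.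
rewrite mulr0 addr0 mevalC.
rewrite comp_mpoly_meval; congr (_ * _); apply: meval_eq => l.
exact: tbchart0.
Qed.
Definition det3R (R : comRingType) (a b c : 'I_3 -> R) : R :=
  a i0 * (b i1 * c i2 - b i2 * c i1)
  - a i1 * (b i0 * c i2 - b i2 * c i0)
  + a i2 * (b i0 * c i1 - b i1 * c i0).

Lemma det3E a b c : det3 a b c = det3R a b c. Proof. by []. Qed.

Section Generic.
Variable R : comRingType.
Implicit Types (a b c x y g : 'I_3 -> R) (cf : 'X_{1..3} -> R).

Lemma cramer a b r x k :
  det3R a b r * x k = det3R x b r * a k + det3R a x r * b k + det3R a b x * r k.
Proof. by move: k; apply: ord3P; rewrite /det3R; ring. Qed.

Lemma lin3 a b c g k :
  det3R a b c * g k =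
    (b i1 * c i2 - b i2 * c i1) * (if k == i0 then \sum_(l < 3) a l * g l else 0) + 0.
Abort.

Lemma lin3 a b c g :
  let d x := x i0 * g i0 + x i1 * g i1 + x i2 * g i2 in
  forall k, det3R a b c * g k =
    (det3R (fun l => (l == k)%:R) b c) * d a + (det3R a (fun l => (l == k)%:R) c) * d b
    + (det3R a b (fun l => (l == k)%:R)) * d c.
Proof. by move=> d; apply: ord3P; rewrite /det3R /d /=; ring. Qed.

Lemma euler3 cf y :
  \sum_(k < 3) y k * grm ms3 cf k y = 3%:R * evm ms3 cf y.
Proof. rewrite sum3; expl; ring. Qed.

Lemma evm_scale3 cf s y : evm ms3 cf (fun k => s * y k) = s ^+ 3 * evm ms3 cf y.
Proof. expl; ring. Qed.

Lemma binary3 cf s t a b :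
  evm ms3 cf (fun k => s * a k + t * b k) =
    evm ms3 cf a * s ^+ 3 + (\sum_(k < 3) b k * grm ms3 cf k a) * s ^+ 2 * t
    + (\sum_(k < 3) a k * grm ms3 cf k b) * s * t ^+ 2 + evm ms3 cf b * t ^+ 3.
Proof. rewrite !sum3; expl; ring. Qed.

Lemma evm_ext ms cf y y' : (forall k, y k = y' k) -> evm ms cf y = evm ms cf y'.
Proof. by move=> h; apply: eq_bigr => m _; rewrite /mono !h. Qed.
End Generic.

Section Push.
Variables (R S : comRingType) (f : {rmorphism R -> S}).
Lemma evm_rmorph ms (cf : 'X_{1..3} -> R) (y : 'I_3 -> R) :
  f (evm ms cf y) = evm ms (fun m => f (cf m)) (fun k => f (y k)).
Proof.
rewrite /evm rmorph_sum; apply: eq_bigr => m _.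
by rewrite (rmorphM f) /mono !(rmorphM f) !(rmorphXn f).
Qed.
Lemma grm_rmorph ms (cf : 'X_{1..3} -> R) k (y : 'I_3 -> R) :
  f (grm ms cf k y) = grm ms (fun m => f (cf m)) k (fun k => f (y k)).
Proof.
rewrite /grm rmorph_sum; apply: eq_bigr => m _.
by rewrite !(rmorphM f) (rmorph_nat f) !(rmorphXn f).
Qed.
Lemma det3R_rmorph (a b c : 'I_3 -> R) :
  f (det3R a b c) = det3R (fun k => f (a k)) (fun k => f (b k)) (fun k => f (c k)).
Proof. by rewrite /det3R !(rmorphD f, rmorphN f, rmorphM f). Qed.
End Push.

Section K.
Variable F : {mpoly C[3]}.
Hypothesis hF : F \is 3.-homog.

Lemma K1 : F = \sum_(m <- ms3) (F@_m)%:MP * 'X_[m].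
Proof. exact: decomp ms3_uniq ms3_cover hF. Qed.
Lemma K2 x : meval x F = evm ms3 (fun m => F@_m) x.
Proof. by rewrite {1}K1 meval_sumX. Qed.
Lemma K3 k x : meval x (mderiv k F) = grm ms3 (fun m => F@_m) k x.
Proof. by rewrite {1}K1 meval_deriv_sumX. Qed.
Lemma K4 n (T : 3.-tuple {mpoly C[n]}) :
  F \mPo T = evm ms3 (fun m => (F@_m)%:MP) (tnth T).
Proof. by rewrite {1}K1 comp_sumX. Qed.
Lemma euler a : gdot F a a = 3%:R * meval a F.
Proof.
rewrite /gdot K2 -euler3; apply: eq_bigr => k _; by rewrite K3.
Qed.
End K.

Definition e (k : 'I_3) : vec := fun l => if l == k then 1 else 0.

Lemma det3_e12 a : det3 a (e i1) (e i2) = a i0.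
Proof. rewrite det3E /det3R /e /=; ring. Qed.
Lemma det3_e02 a : det3 a (e i0) (e i2) = - a i1.
Proof. rewrite det3E /det3R /e /=; ring. Qed.
Lemma det3_e01 a : det3 a (e i0) (e i1) = a i2.
Proof. rewrite det3E /det3R /e /=; ring. Qed.
Lemma det3_e0 a b : det3 a b (e i0) = a i1 * b i2 - a i2 * b i1.
Proof. rewrite det3E /det3R /e /=; ring. Qed.
Lemma det3_e1 a b : det3 a b (e i1) = a i2 * b i0 - a i0 * b i2.
Proof. rewrite det3E /det3R /e /=; ring. Qed.
Lemma det3_e2 a b : det3 a b (e i2) = a i0 * b i1 - a i1 * b i0.
Proof. rewrite det3E /det3R /e /=; ring. Qed.

Lemma basis_exists a : nz a -> exists w u, det3 a w u != 0.
Proof.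
case=> k; move: k; apply: ord3P => h.
- by exists (e i1), (e i2); rewrite det3_e12.
- by exists (e i0), (e i2); rewrite det3_e02 oppr_eq0.
- by exists (e i0), (e i1); rewrite det3_e01.
Qed.

Lemma indep a b : nz a -> (forall k, det3 a b (e k) = 0) -> exists c, forall k, b k = c * a k.
Proof.
move=> [j hj] h.
have E0 : a i1 * b i2 = a i2 * b i1 by apply/eqP; rewrite -subr_eq0 -det3_e0 h.
have E1 : a i2 * b i0 = a i0 * b i2 by apply/eqP; rewrite -subr_eq0 -det3_e1 h.
have E2 : a i0 * b i1 = a i1 * b i0 by apply/eqP; rewrite -subr_eq0 -det3_e2 h.
have key : forall j k, b k * a j = b j * a k.
  by apply: ord3P; apply: ord3P; rewrite mulrC [RHS]mulrC ?E0 ?E1 ?E2 // mulrC.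
exists (b j / a j); move=> k.
by rewrite mulrAC -key mulfK.
Qed.

Lemma exists_e a b : nz a -> ~ (exists c, forall k, b k = c * a k) ->
  exists k, det3 a b (e k) != 0.
Proof.
move=> ha hn.
case: (eqVneq (det3 a b (e i0)) 0) => h0; last by exists i0.
case: (eqVneq (det3 a b (e i1)) 0) => h1; last by exists i1.
case: (eqVneq (det3 a b (e i2)) 0) => h2; last by exists i2.
by exfalso; apply: hn; apply: indep => //; apply: ord3P.
Qed.

Lemma gdot3 F a v : gdot F a v = v i0 * meval a (mderiv i0 F) + v i1 * meval a (mderiv i1 F)
  + v i2 * meval a (mderiv i2 F).
Proof. by rewrite /gdot sum3. Qed.

Lemma grad0 F a w u : det3 a w u != 0 -> gdot F a a = 0 -> gdot F a w = 0 -> gdot F a u = 0 ->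
  forall k, meval a (mderiv k F) = 0.
Proof.
move=> hd ha hw hu k.
move: (lin3 a w u (fun k => meval a (mderiv k F))) => /= L.
move: (L k); rewrite -!gdot3 ha hw hu !mulr0 !addr0 => /eqP.
by rewrite mulf_eq0 -det3E (negbTE hd) /= => /eqP.
Qed.

Lemma eval1 F p : nz p -> pmult_ge F p 1 -> meval p F = 0.
Proof.
move=> hp hm; have [w [u hwu]] := basis_exists hp.
by rewrite -(chart_c0 F p w u); apply: (hm w u hwu); rewrite mdeg0.
Qed.

Lemma sing2 F p : F \is 3.-homog -> nz p -> pmult_ge F p 2 ->
  meval p F = 0 /\ forall k, meval p (mderiv k F) = 0.
Proof.
move=> hF hp hm; have [w [u hwu]] := basis_exists hp.
have G2 := hm w u hwu.
have hF0 : meval p F = 0 by rewrite -(chart_c0 F p w u); apply: G2; rewrite mdeg0.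
split => //.
apply: (grad0 hwu).
- by rewrite euler // hF0 mulr0.
- by rewrite -(chart_c1 F p w u); apply: G2; rewrite mdeg1.
- by rewrite -(chart_c2 F p w u); apply: G2; rewrite mdeg1.
Qed.

Lemma sing_exc F a w : F \is 3.-homog -> nz a -> meval a F = 0 ->
  ~ (exists c, forall k, w k = c * a k) ->
  (forall u, det3 a w u != 0 -> ord_ge (F \mPo bchart a w u) (2 + 1)) ->
  forall k, meval a (mderiv k F) = 0.
Proof.
move=> hF ha hF0 hn hm.
have [k hk] := exists_e ha hn.
have G := hm _ hk.
apply: (grad0 hk).
- by rewrite euler // hF0 mulr0.
- by rewrite -(bchart_c1 F a w (e k)); apply: G; rewrite mdeg1.
- rewrite -(bchart_c11 F a w (e k)); apply: G; by rewrite mdegD !mdeg1.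
Qed.
Definition fnl (o : option 'I_3) (q : {mpoly C[3]}) : {mpoly C[3]} :=
  if o is Some k then mderiv k q else q.

Lemma fnl_mulC o c q : fnl o (c%:MP * q) = c%:MP * fnl o q.
Proof. by case: o => [k|] //=; rewrite mderiv_mulC. Qed.
Lemma fnlD o p q : fnl o (p + q) = fnl o p + fnl o q.
Proof. by case: o => [k|] //=; rewrite mderivD. Qed.
Lemma fnl0 o : fnl o 0 = 0.
Proof. by case: o => [k|] //=; rewrite mderiv0. Qed.

Definition idx (a : 'I_8) (k : 'I_3) : 'I_24 := inord (3 * a + k).
Definition pv (a : 'I_8) : 3.-tuple {mpoly C[24]} := [tuple 'X_(idx a k) | k < 3].

Lemma coords_idx P a k : coords P (idx a k) = P a k.
Proof.
have hlt : (3 * a + k < 24)%N.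
  have := ltn_ord a; have := ltn_ord k; lia.
rewrite /coords /idx inordK //.
have -> : ((3 * a + k) %/ 3 = a)%N.
  rewrite mulnC divnMDl // divn_small ?addn0 //.
have -> : ((3 * a + k) %% 3 = k)%N.
  rewrite mulnC modnMDl modn_small //.
by rewrite !inord_val.
Qed.

Lemma meval_pv P a q : meval (coords P) (q \mPo pv a) = meval (P a) q.
Proof.
rewrite comp_mpoly_meval; apply: meval_eq => k.
by rewrite tnth_mktuple mevalXU coords_idx.
Qed.

Section Mat.
Variables (N : nat) (ms : seq 'X_{1..3}) (rho : 'I_N -> 'I_8 * option 'I_3).
Hypothesis hN : size ms = N.
Hypothesis hu : uniq ms.

Definition Mx (P : 'I_8 -> vec) : 'M[C]_N :=
  \matrix_(j, r) meval (P (rho r).1) (fnl (rho r).2 'X_[nth 0%MM ms j]).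
Definition Dp : {mpoly C[24]} :=
  \det (\matrix_(j, r) (fnl (rho r).2 'X_[nth 0%MM ms j] \mPo pv (rho r).1)).

Lemma Dp_eval P : meval (coords P) Dp = \det (Mx P).
Proof.
rewrite /Dp -det_map_mx; congr (\det _); apply/matrixP => j r.
rewrite !mxE; exact: meval_pv.
Qed.

Lemma Mx_mul P (v : 'rV_N) r :
  (v *m Mx P) 0 r = meval (P (rho r).1) (fnl (rho r).2 (\sum_(j < N) (v 0 j)%:MP * 'X_[nth 0%MM ms j])).
Proof.
rewrite !mxE (big_morph (fnl (rho r).2) (fnlD _) (fnl0 _)).
rewrite (big_morph (meval (P (rho r).1)) (mevalD _) (meval0 _)).
apply: eq_bigr => j _; by rewrite !mxE fnl_mulC mevalM mevalC.
Qed.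

Lemma sum_reindex (c : 'X_{1..3} -> C) :
  \sum_(m <- ms) (c m)%:MP * 'X_[m] = \sum_(j < N) (c (nth 0%MM ms j))%:MP * 'X_[nth 0%MM ms j] :> {mpoly C[3]}.
Proof. by rewrite (big_nth 0%MM) hN big_mkord. Qed.

Lemma kernel P F : F = \sum_(m <- ms) (F@_m)%:MP * 'X_[m] -> \det (Mx P) != 0 ->
  (forall r, meval (P (rho r).1) (fnl (rho r).2 F) = 0) -> F = 0.
Proof.
move=> hF hd hr.
pose v : 'rV_N := \row_j F@_(nth 0%MM ms j).
have hv : v *m Mx P = 0.
  apply/rowP => r; rewrite Mx_mul mxE -(hr r) [in RHS]hF sum_reindex.
  by congr (meval _ (fnl _ _)); apply: eq_bigr => j _; rewrite mxE.
have v0 : v = 0.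
  apply/eqP; apply: contraNT hd => nz; apply/det0P; by exists v.
rewrite hF big_seq big1 // => m hm.
have [j hj] : exists j : 'I_N, nth 0%MM ms j = m.
  have hi : (index m ms < N)%N by rewrite -hN index_mem.
  by exists (Ordinal hi); rewrite /= nth_index.
have := congr1 (fun w : 'rV_N => w 0 j) v0; rewrite !mxE hj => ->.
by rewrite mpolyC0 mul0r.
Qed.

Lemma det_nz P :
  (forall c : 'X_{1..3} -> C,
     (forall r, meval (P (rho r).1) (fnl (rho r).2 (\sum_(m <- ms) (c m)%:MP * 'X_[m])) = 0) ->
     forall m, m \in ms -> c m = 0) ->
  \det (Mx P) != 0.
Proof.
move=> hc; apply/negP => /det0P [v nzv hv].
pose c (m : 'X_{1..3}) := \sum_(j < N | nth 0%MM ms j == m) v 0 j.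
have cE : forall j : 'I_N, c (nth 0%MM ms j) = v 0 j.
  move=> j; rewrite /c (bigD1 j) //= big1 ?addr0 // => l /andP [/eqP e ne].
  exfalso; move: ne; apply/negP; rewrite negbK; apply/eqP/val_inj => /=.
  by apply/eqP; rewrite -(nth_uniq 0%MM _ _ hu) ?e // hN.
have := hc c; rewrite sum_reindex.
have -> : \sum_(j < N) (c (nth 0%MM ms j))%:MP * 'X_[nth 0%MM ms j] =
          \sum_(j < N) (v 0 j)%:MP * 'X_[nth 0%MM ms j] :> {mpoly C[3]}.
  by apply: eq_bigr => j _; rewrite cE.
move=> h.
have h' : forall m, m \in ms -> c m = 0.
  by apply: h => r; rewrite -Mx_mul hv mxE.
move: nzv; apply/negP; rewrite negbK; apply/eqP/rowP => j.
by rewrite mxE -cE h' // mem_nth // hN.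
Qed.
End Mat.
Definition pt3 (x y z : C) : vec := fun k => if k == i0 then x else if k == i1 then y else z.
Definition rho_ev (n : nat) (f : 'I_n -> 'I_8) : 'I_n -> 'I_8 * option 'I_3 := fun r => (f r, None).
Definition D3 (f : {ffun 'I_3 -> 'I_8}) := Dp ms1 (rho_ev f).
Definition D6 (f : {ffun 'I_6 -> 'I_8}) := Dp ms2 (rho_ev f).
Definition o3 (n : nat) : 'I_3 := match n with 0 => i0 | 1 => i1 | _ => i2 end.
Definition rho10 (i : 'I_8) : 'I_10 -> 'I_8 * option 'I_3 :=
  fun r => if (r < 3)%N then (i, Some (o3 r)) else (lift i (inord (r - 3)), None).
Definition D10 i := Dp ms3 (rho10 i).

Definition Ppick (n : nat) (f : 'I_n -> 'I_8) (pts : 'I_n -> vec) : 'I_8 -> vec :=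
  fun a => if [pick r | f r == a] is Some r then pts r else e i0.
Lemma Ppick_f n (f : 'I_n -> 'I_8) pts r : injective f -> Ppick f pts (f r) = pts r.
Proof. by move=> hf; rewrite /Ppick; case: pickP => [r' /eqP /hf -> //|/(_ r)]; rewrite eqxx. Qed.

Lemma nz_of_eval (p : {mpoly C[24]}) x : meval x p != 0 -> p != 0.
Proof. by apply: contraNneq => ->; rewrite meval0. Qed.

Lemma in_ms1 m : m \in ms1 -> m = mk3 1 0 0 \/ m = mk3 0 1 0 \/ m = mk3 0 0 1.
Proof. by rewrite !inE => /or3P [] /eqP ->; auto. Qed.

Definition pts3 (r : 'I_3) : vec := e r.

Lemma D3_nz (f : {ffun 'I_3 -> 'I_8}) : injective f -> D3 f != 0.
Proof.
move=> hf; apply: (@nz_of_eval _ (coords (Ppick f pts3))).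
rewrite /D3 Dp_eval //; apply: det_nz => // c h m.
have H : forall r, evm ms1 c (e r) = 0.
  by move=> r; move: (h r); rewrite /= Ppick_f // meval_sumX.
have H0 := H i0; have H1 := H i1; have H2 := H i2.
have E0 : c (mk3 1 0 0) = 0 by rewrite -H0; expl; rewrite /e /=; ring.
have E1 : c (mk3 0 1 0) = 0 by rewrite -H1; expl; rewrite /e /=; ring.
have E2 : c (mk3 0 0 1) = 0 by rewrite -H2; expl; rewrite /e /=; ring.
by move/in_ms1 => [->|[->|->]].
Qed.

Definition pts6 (r : 'I_6) : vec :=
  match val r with 0 => e i0 | 1 => e i1 | 2 => e i2 | 3 => pt3 1 1 0 | 4 => pt3 0 1 1
  | _ => pt3 1 0 1 end.

Lemma D6_nz (f : {ffun 'I_6 -> 'I_8}) : injective f -> D6 f != 0.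
Proof.
move=> hf; apply: (@nz_of_eval _ (coords (Ppick f pts6))).
rewrite /D6 Dp_eval //; apply: det_nz => // c h m hm.
have H : forall r, evm ms2 c (pts6 r) = 0.
  by move=> r; move: (h r); rewrite /= Ppick_f // meval_sumX.
have E0 : c (mk3 2 0 0) = 0 by rewrite -(H (@Ordinal 6 0 isT)); expl; rewrite /e /=; ring.
have E1 : c (mk3 0 2 0) = 0 by rewrite -(H (@Ordinal 6 1 isT)); expl; rewrite /e /=; ring.
have E2 : c (mk3 0 0 2) = 0 by rewrite -(H (@Ordinal 6 2 isT)); expl; rewrite /e /=; ring.
have E3 : c (mk3 2 0 0) + c (mk3 0 2 0) + c (mk3 1 1 0) = 0.
  by rewrite -(H (@Ordinal 6 3 isT)); expl; rewrite /pt3 /=; ring.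
have E4 : c (mk3 0 2 0) + c (mk3 0 0 2) + c (mk3 0 1 1) = 0.
  by rewrite -(H (@Ordinal 6 4 isT)); expl; rewrite /pt3 /=; ring.
have E5 : c (mk3 2 0 0) + c (mk3 0 0 2) + c (mk3 1 0 1) = 0.
  by rewrite -(H (@Ordinal 6 5 isT)); expl; rewrite /pt3 /=; ring.
rewrite E0 E1 !add0r in E3; rewrite E1 E2 !add0r in E4; rewrite E0 E2 !add0r in E5.
apply/eqP; move: m hm; apply/allP; by rewrite /= E0 E1 E2 E3 E4 E5 eqxx.
Qed.

Definition pts7 (n : nat) : vec :=
  match n with 0 => e i1 | 1 => e i2 | 2 => pt3 1 1 0 | 3 => pt3 1 0 1 | 4 => pt3 1 1 1
  | 5 => pt3 0 1 1 | _ => pt3 0 1 (-1) end.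
Definition P10 (i : 'I_8) : 'I_8 -> vec :=
  fun a => if unlift i a is Some s then pts7 (val s) else e i0.
Lemma P10_i i : P10 i i = e i0. Proof. by rewrite /P10 unlift_none. Qed.
Lemma P10_lift i n : (n < 7)%N -> P10 i (lift i (inord n)) = pts7 n.
Proof. by move=> h; rewrite /P10 liftK /= inordK. Qed.

Lemma D10_nz i : D10 i != 0.
Proof.
apply: (@nz_of_eval _ (coords (P10 i))).
rewrite /D10 Dp_eval //; apply: det_nz => // c h m hm.
have HD : forall k : nat, (k < 3)%N -> grm ms3 c (o3 k) (e i0) = 0.
  move=> k hk; have hk' : (k < 10)%N by apply: leq_trans hk _.
  move: (h (Ordinal hk')); rewrite /rho10 /= hk /= P10_i meval_deriv_sumX //.
have HP : forall k : nat, (3 <= k < 10)%N -> evm ms3 c (pts7 (k - 3)) = 0.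
  move=> k /andP [hk1 hk2]; move: (h (Ordinal hk2)); rewrite /rho10 /=.
  rewrite ltnNge hk1 /= P10_lift ?meval_sumX //; lia.
have E0 : c (mk3 3 0 0) * 3%:R = 0 by rewrite -(HD 0%N isT); expl; rewrite /e /=; ring.
have E1 : c (mk3 2 1 0) = 0 by rewrite -(HD 1%N isT); expl; rewrite /e /=; ring.
have E2 : c (mk3 2 0 1) = 0 by rewrite -(HD 2%N isT); expl; rewrite /e /=; ring.
have E3 : c (mk3 0 3 0) = 0 by rewrite -(HP 3%N isT); expl; rewrite /e /=; ring.
have E4 : c (mk3 0 0 3) = 0 by rewrite -(HP 4%N isT); expl; rewrite /e /=; ring.
have E5 : c (mk3 3 0 0) + c (mk3 2 1 0) + c (mk3 1 2 0) + c (mk3 0 3 0) = 0.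
  by rewrite -(HP 5%N isT); expl; rewrite /pt3 /=; ring.
have E6 : c (mk3 3 0 0) + c (mk3 2 0 1) + c (mk3 1 0 2) + c (mk3 0 0 3) = 0.
  by rewrite -(HP 6%N isT); expl; rewrite /pt3 /=; ring.
have E7 : c (mk3 3 0 0) + c (mk3 2 1 0) + c (mk3 2 0 1) + c (mk3 1 2 0) + c (mk3 1 1 1)
  + c (mk3 1 0 2) + c (mk3 0 3 0) + c (mk3 0 2 1) + c (mk3 0 1 2) + c (mk3 0 0 3) = 0.
  by rewrite -(HP 7%N isT); expl; rewrite /pt3 /=; ring.
have E8 : c (mk3 0 3 0) + c (mk3 0 2 1) + c (mk3 0 1 2) + c (mk3 0 0 3) = 0.
  by rewrite -(HP 8%N isT); expl; rewrite /pt3 /=; ring.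
have E9 : c (mk3 0 3 0) - c (mk3 0 2 1) + c (mk3 0 1 2) - c (mk3 0 0 3) = 0.
  by rewrite -(HP 9%N isT); expl; rewrite /pt3 /=; ring.
have Z0 : c (mk3 3 0 0) = 0.
  by move/eqP: E0; rewrite mulf_eq0 Num.Theory.pnatr_eq0 orbF => /eqP.
rewrite Z0 E1 E3 !add0r addr0 in E5.
rewrite Z0 E2 E4 !add0r addr0 in E6.
have Z8 : c (mk3 0 1 2) = 0.
  have : c (mk3 0 1 2) *+ 2 =
    (c (mk3 0 3 0) + c (mk3 0 2 1) + c (mk3 0 1 2) + c (mk3 0 0 3))
    + (c (mk3 0 3 0) - c (mk3 0 2 1) + c (mk3 0 1 2) - c (mk3 0 0 3)) - c (mk3 0 3 0) *+ 2.
    by rewrite !mulr2n; ring.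
  rewrite E8 E9 E3 add0r mul0rn subr0 => /eqP.
  by rewrite Num.Theory.mulrn_eq0 /= => /eqP.
have Z7 : c (mk3 0 2 1) = 0 by move: E8; rewrite E3 E4 Z8 add0r !addr0.
rewrite Z0 E1 E2 E5 E6 E3 E4 Z7 Z8 !add0r !addr0 in E7.
apply/eqP; move: m hm; apply/allP.
by rewrite /= Z0 E1 E2 E3 E4 E5 E6 E7 Z7 Z8 eqxx.
Qed.
Definition Gp : {mpoly C[24]} :=
  (\prod_(f : {ffun 'I_3 -> 'I_8} | injectiveb f) D3 f) *
  (\prod_(f : {ffun 'I_6 -> 'I_8} | injectiveb f) D6 f) *
  \prod_(i : 'I_8) D10 i.

Lemma Gp_nz : Gp != 0.
Proof.
rewrite !mulf_neq0 //.
- by apply/prodf_neq0 => f /injectiveP; exact: D3_nz.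
- by apply/prodf_neq0 => f /injectiveP; exact: D6_nz.
- by apply/prodf_neq0 => i _; exact: D10_nz.
Qed.

Lemma Gp_eval P : meval (coords P) Gp != 0 ->
  [/\ (forall f : {ffun 'I_3 -> 'I_8}, injective f -> \det (Mx ms1 (rho_ev f) P) != 0),
      (forall f : {ffun 'I_6 -> 'I_8}, injective f -> \det (Mx ms2 (rho_ev f) P) != 0) &
      (forall i, \det (Mx ms3 (rho10 i) P) != 0)].
Proof.
rewrite /Gp !mevalM !(big_morph (meval (coords P)) (mevalM _) (meval1 _)).
rewrite !mulf_eq0 !negb_or => /andP [/andP [h3 h6] h10]; split.
- move=> f hf; move/prodf_neq0: h3 => /(_ f); rewrite -Dp_eval //.
  by apply; apply/injectiveP.
- move=> f hf; move/prodf_neq0: h6 => /(_ f); rewrite -Dp_eval //.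
  by apply; apply/injectiveP.
- move=> i; move/prodf_neq0: h10 => /(_ i); rewrite -Dp_eval //; by apply.
Qed.

Section Generic8.
Variable P : 'I_8 -> vec.
Hypothesis hG : meval (coords P) Gp != 0.

Lemma gen10 i F : F \is 3.-homog -> (forall j, meval (P j) F = 0) ->
  (forall k, meval (P i) (mderiv k F) = 0) -> F = 0.
Proof.
move=> hF h0 h1; have [_ _ h] := Gp_eval hG.
apply: (@kernel _ ms3 (rho10 i) erefl P) => //.
- exact: K1.
- move=> r; rewrite /rho10; case: ifP => _ /=; [exact: h1 | exact: h0].
Qed.

Lemma gen3 L (f : {ffun 'I_3 -> 'I_8}) : L \is 1.-homog -> injective f ->
  (forall r, meval (P (f r)) L = 0) -> L = 0.
Proof.
move=> hL hf h0; have [h _ _] := Gp_eval hG.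
apply: (@kernel _ ms1 (rho_ev f) erefl P) => //.
- exact: decomp ms1_uniq ms1_cover hL.
- exact: h.
Qed.

Lemma gen6 Q (f : {ffun 'I_6 -> 'I_8}) : Q \is 2.-homog -> injective f ->
  (forall r, meval (P (f r)) Q = 0) -> Q = 0.
Proof.
move=> hQ hf h0; have [_ h _] := Gp_eval hG.
apply: (@kernel _ ms2 (rho_ev f) erefl P) => //.
- exact: decomp ms2_uniq ms2_cover hQ.
- exact: h.
Qed.

Lemma pick_inj (n : nat) (S : {set 'I_8}) : (n <= #|S|)%N ->
  exists f : {ffun 'I_n -> 'I_8}, injective f /\ forall r, f r \in S.
Proof.
move=> hn; exists [ffun r : 'I_n => nth ord0 (enum S) r]; split.
- move=> r1 r2; rewrite !ffunE => /eqP; rewrite nth_uniq ?enum_uniq //.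
  + by move/eqP/val_inj.
  + by rewrite -cardE; apply: leq_trans hn.
  + by rewrite -cardE; apply: leq_trans hn.
- move=> r; rewrite ffunE -mem_enum mem_nth // -cardE; exact: leq_trans hn.
Qed.

Lemma no_line_conic L Q : L \is 1.-homog -> L != 0 -> Q \is 2.-homog -> Q != 0 ->
  ~ (forall i, meval (P i) L = 0 \/ meval (P i) Q = 0).
Proof.
move=> hL nL hQ nQ h.
pose S1 := [set i | meval (P i) L == 0]; pose S2 := [set i | meval (P i) Q == 0].
have hU : S1 :|: S2 = setT.
  apply/setP => i; rewrite !inE; by case: (h i) => ->; rewrite eqxx ?orbT.
have hc : (8 <= #|S1| + #|S2|)%N.
  have e8 : #|S1 :|: S2| = 8%N by rewrite hU cardsT card_ord.
  by have := (leq_card_setU S1 S2).1; rewrite e8.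
have [h1|h2] : (3 <= #|S1|)%N \/ (6 <= #|S2|)%N by lia.
- have [f [hf hS]] := pick_inj h1; apply/negP: nL; rewrite negbK; apply/eqP.
  apply: (gen3 hL hf) => r; by move: (hS r); rewrite inE => /eqP.
- have [f [hf hS]] := pick_inj h2; apply/negP: nQ; rewrite negbK; apply/eqP.
  apply: (gen6 hQ hf) => r; by move: (hS r); rewrite inE => /eqP.
Qed.
End Generic8.
Lemma msize_homog (F : {mpoly C[3]}) d : F \is d.-homog -> F != 0 -> msize F = d.+1.
Proof. move=> h nF; rewrite -mlead_deg //; congr _.+1; apply: (dhomog_mf h); exact: mlead_supp. Qed.

Lemma factor_aux (G0 G1 H0 H1 H2 : {mpoly C[3]}) :
  G0 \is 0.-homog -> G1 \is 1.-homog -> H0 \is 0.-homog -> H1 \is 1.-homog -> H2 \is 2.-homog ->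
  (G0 + G1) * (H0 + H1 + H2) \is 3.-homog -> (G0 + G1) * (H0 + H1 + H2) = G1 * H2.
Proof.
move=> g0 g1 h0 h1 h2 hX.
rewrite -(pihomog_dE hX) !mulrDl !mulrDr !pihomogD.
rewrite (pihomog_ne0 _ (dhomogM g0 h0)) // (pihomog_ne0 _ (dhomogM g0 h1)) //.
rewrite (pihomog_ne0 _ (dhomogM g0 h2)) // (pihomog_ne0 _ (dhomogM g1 h0)) //.
rewrite (pihomog_ne0 _ (dhomogM g1 h1)) // (pihomog_dE (dhomogM g1 h2)).
by rewrite !add0r.
Qed.

Lemma factor_homog (G H : {mpoly C[3]}) : G * H \is 3.-homog -> (msize G <= 2)%N -> (msize H <= 3)%N ->
  G * H = pihomog mdeg 1 G * pihomog mdeg 2 H.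
Proof.
move=> hF hG hH.
have eG : G = pihomog mdeg 0 G + pihomog mdeg 1 G.
  by rewrite {1}(pihomog_partitionE hG) !big_ord_recr big_ord0 /= add0r.
have eH : H = pihomog mdeg 0 H + pihomog mdeg 1 H + pihomog mdeg 2 H.
  by rewrite {1}(pihomog_partitionE hH) !big_ord_recr big_ord0 /= add0r.
have := factor_aux (pihomogP mdeg 0 G) (pihomogP mdeg 1 G) (pihomogP mdeg 0 H)
  (pihomogP mdeg 1 H) (pihomogP mdeg 2 H).
by rewrite -eG -eH; apply.
Qed.

Section Irred.
Variable P : 'I_8 -> vec.
Hypothesis hG : meval (coords P) Gp != 0.

Lemma irred_case F G H : F \is 3.-homog -> F != 0 -> (forall i, meval (P i) F = 0) ->
  F = G * H -> msize G = 2%N -> msize H = 3%N -> False.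
Proof.
move=> hF nF h0 eF sG sH.
have eF' : F = pihomog mdeg 1 G * pihomog mdeg 2 H.
  by rewrite eF factor_homog -?eF // ?sG ?sH.
have nG1 : pihomog mdeg 1 G != 0 by apply: contraNneq nF => e; rewrite eF' e mul0r.
have nH2 : pihomog mdeg 2 H != 0 by apply: contraNneq nF => e; rewrite eF' e mulr0.
apply: (no_line_conic hG (pihomogP mdeg 1 G) nG1 (pihomogP mdeg 2 H) nH2) => i.
by move: (h0 i); rewrite eF' mevalM => /eqP; rewrite mulf_eq0 => /orP [] /eqP; auto.
Qed.

Lemma irred_gen F : F \is 3.-homog -> F != 0 -> (forall i, meval (P i) F = 0) ->
  forall G H, F = G * H -> (msize G <= 1)%N \/ (msize H <= 1)%N.
Proof.
move=> hF nF h0 G H eF.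
case: (leqP (msize G) 1) => hG1; first by left.
case: (leqP (msize H) 1) => hH1; first by right.
exfalso.
have nG : G != 0 by apply: contraNneq nF => e; rewrite eF e mul0r.
have nH : H != 0 by apply: contraNneq nF => e; rewrite eF e mulr0.
have s4 := msize_homog hF nF.
have sGH : msize F = (msize G + msize H).-1.
  by rewrite eF msizeM_proper // mulf_neq0 // mleadc_eq0.
have [[a b]|[a b]] : (msize G = 2 /\ msize H = 3 \/ msize G = 3 /\ msize H = 2)%N by lia.
- exact: (irred_case hF nF h0 eF a b).
- by apply: (irred_case hF nF h0 _ b a); rewrite mulrC.
Qed.
End Irred.
Lemma closure_div n k (U T : n.-tuple {mpoly C[k]}) (L : {mpoly C[k]}) (g : 'I_n -> {mpoly C[k]}) :
  (forall l, tnth U l - tnth T l = L * g l) ->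
  forall F : {mpoly C[n]}, exists R, (F \mPo U) - (F \mPo T) = L * R.
Proof.
move=> hUT; elim/gen_ind => [c|l|p q [Rp hp] [Rq hq]|p q [Rp hp] [Rq hq]].
- by exists 0; rewrite !comp_mpolyC subrr mulr0.
- by exists (g l); rewrite !comp_mpolyXU -!tnth_nth hUT.
- exists (Rp + Rq).
  rewrite !comp_mpolyD mulrDr -hp -hq.
  move: (p \mPo U) (p \mPo T) (q \mPo U) (q \mPo T) => a b c d; ring.
- exists (Rp * (q \mPo U) + (p \mPo T) * Rq).
  rewrite !comp_mpolyM'.
  move: hp hq; move: (p \mPo U) (p \mPo T) (q \mPo U) (q \mPo T) => a b c d hp hq.
  have -> : a * c - b * d = (a - b) * c + b * (c - d) by ring.
  rewrite hp hq; ring.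
Qed.

Definition Xf : 'I_3 -> {mpoly C[3]} := fun l => 'X_l.
Definition vC (v : vec) : 'I_3 -> {mpoly C[3]} := fun l => (v l)%:MP.

Lemma meval_det3R_C (x a b c : vec) :
  meval x (det3R (vC a) (vC b) (vC c)) = det3R a b c.
Proof. by rewrite (det3R_rmorph (meval x)) /det3R /vC /= !mevalC. Qed.

Lemma meval_det3R_X (x a b : vec) : meval x (det3R (vC a) (vC b) Xf) = det3R a b x.
Proof. by rewrite (det3R_rmorph (meval x)) /det3R /vC /Xf /= !mevalC !mevalXU. Qed.

Lemma det3R_vC (a b c : vec) : det3R (vC a) (vC b) (vC c) = (det3R a b c)%:MP.
Proof. by rewrite (det3R_rmorph (@mpolyC 3 C)). Qed.

Section TwoSing.
Variable F : {mpoly C[3]}.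
Hypothesis hF : F \is 3.-homog.

Lemma F_comp_id : F = evm ms3 (fun m => (F@_m)%:MP) Xf.
Proof.
rewrite -{1}(comp_mpoly_id F). rewrite (K4 hF). apply: evm_ext => l; by rewrite tnth_mktuple.
Qed.

Lemma comp_scale (d : {mpoly C[3]}) : F \mPo [tuple d * 'X_l | l < 3] = d ^+ 3 * F.
Proof.
rewrite (K4 hF).
rewrite (@evm_ext _ _ _ _ (fun l => d * Xf l)); last by move=> l; rewrite tnth_mktuple.
by rewrite evm_scale3 -F_comp_id.
Qed.
Lemma binary_zero (R : comRingType) (cf : 'X_{1..3} -> R) (a b : 'I_3 -> R) s t :
  evm ms3 cf a = 0 -> evm ms3 cf b = 0 -> (forall k, grm ms3 cf k a = 0) ->
  (forall k, grm ms3 cf k b = 0) -> evm ms3 cf (fun k => s * a k + t * b k) = 0.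
Proof.
move=> h1 h2 h3 h4; rewrite binary3 !sum3 h1 h2 !h3 !h4; ring.
Qed.

Lemma comp_line (p p' : vec) (s t : {mpoly C[3]}) :
  meval p F = 0 -> meval p' F = 0 ->
  (forall l, meval p (mderiv l F) = 0) -> (forall l, meval p' (mderiv l F) = 0) ->
  F \mPo [tuple s * (p l)%:MP + t * (p' l)%:MP | l < 3] = 0.
Proof.
move=> h1 h2 h3 h4.
rewrite (K4 hF).
rewrite (@evm_ext _ _ _ _ (fun l => s * vC p l + t * vC p' l)); last first.
  by move=> l; rewrite tnth_mktuple.
have e1 : forall v : vec, evm ms3 (fun m => (F@_m)%:MP) (vC v) = (meval v F)%:MP.
  by move=> v; rewrite (K2 hF) (evm_rmorph (@mpolyC 3 C)).
have e2 : forall (v : vec) l, grm ms3 (fun m => (F@_m)%:MP) l (vC v) = (meval v (mderiv l F))%:MP.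
  by move=> v l; rewrite (K3 hF) (grm_rmorph (@mpolyC 3 C)).
apply: binary_zero.
- by rewrite e1 h1 mpolyC0.
- by rewrite e1 h2 mpolyC0.
- by move=> k; rewrite e2 h3 mpolyC0.
- by move=> k; rewrite e2 h4 mpolyC0.
Qed.
End TwoSing.
Lemma cramer_sub (R : comRingType) (a b r x : 'I_3 -> R) l :
  det3R a b r * x l - (det3R x b r * a l + det3R a x r * b l) = det3R a b x * r l.
Proof. by rewrite cramer; ring. Qed.

Section TwoSingMain.
Variable P : 'I_8 -> vec.
Hypothesis hG : meval (coords P) Gp != 0.

Lemma two_sing F p p' : F \is 3.-homog -> F != 0 -> (forall i, meval (P i) F = 0) ->
  nz p -> nz p' -> ~ proj_eq p p' ->
  meval p F = 0 -> meval p' F = 0 ->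
  (forall l, meval p (mderiv l F) = 0) -> (forall l, meval p' (mderiv l F) = 0) -> False.
Proof.
move=> hF nF h0 hp hp' hnp f1 f2 g1 g2.
have [k hk] : exists k, det3 p p' (e k) != 0.
  apply: exists_e => // -[c hc]; apply: hnp; exists c; split => //.
  apply/negP => /eqP c0; case: hp' => l; by rewrite hc c0 mul0r eqxx.
have hUT : forall l,
    tnth [tuple det3R (vC p) (vC p') (vC (e k)) * 'X_l | l < 3] l
    - tnth [tuple det3R Xf (vC p') (vC (e k)) * (p l)%:MP + det3R (vC p) Xf (vC (e k)) * (p' l)%:MP | l < 3] l
    = det3R (vC p) (vC p') Xf * vC (e k) l.
  move=> l; rewrite !tnth_mktuple.
  exact: (cramer_sub (vC p) (vC p') (vC (e k)) Xf l).
have [R hR] := closure_div hUT F.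
rewrite comp_scale // comp_line // subr0 det3R_vC in hR.
have nD : det3 p p' (e k) != 0 := hk.
have inv : ((det3R p p' (e k)) ^- 3)%:MP * ((det3R p p' (e k))%:MP ^+ 3) = 1 :> {mpoly C[3]}.
  by rewrite -(rmorphXn (@mpolyC 3 C)) -mpolyCM mulVf ?mpolyC1 // expf_neq0.
have eF : F = det3R (vC p) (vC p') Xf * (((det3R p p' (e k)) ^- 3)%:MP * R).
  by rewrite mulrCA -hR mulrA inv mul1r.
have [hL|hR'] := irred_gen hG hF nF h0 eF.
- have cL := msize1_polyC hL.
  have v1 : meval (e k) (det3R (vC p) (vC p') Xf) = det3 p p' (e k) by rewrite meval_det3R_X.
  have v0 : meval (fun _ => 0) (det3R (vC p) (vC p') Xf) = 0.
    by rewrite meval_det3R_X /det3R; ring.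
  by move: v1 v0; rewrite cL !mevalC => -> /eqP; rewrite (negbTE hk).
- have cR := msize1_polyC hR'.
  move: eF; rewrite cR; set c := (_ @_ 0) => eF.
  have ev : forall x, meval x F = det3 p p' x * c.
    by move=> x; rewrite {1}eF mevalM mevalC meval_det3R_X.
  have h2r : meval (fun l => 2 * e k l) F = 2 ^+ 3 * meval (e k) F.
    by rewrite !(K2 hF) evm_scale3.
  rewrite !ev in h2r.
  have e2 : det3 p p' (fun l => 2 * e k l) = 2 * det3 p p' (e k) by rewrite !det3E /det3R; ring.
  rewrite e2 in h2r.
  have : 6%:R * (det3 p p' (e k) * c) = 2 ^+ 3 * (det3 p p' (e k) * c) - 2 * det3 p p' (e k) * c.
    by ring.
  rewrite -h2r subrr => /eqP; rewrite !mulf_eq0 Num.Theory.pnatr_eq0 (negbTE hk) /= => /eqP c0.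
  by move/negP: nF; apply; rewrite eF c0 mpolyC0 mulr0.
Qed.
End TwoSingMain.
Lemma det3R_scale (R : comRingType) (s : R) (a b c : 'I_3 -> R) :
  det3R (fun l => s * a l) (fun l => s * b l) (fun l => s * c l) = s ^+ 3 * det3R a b c.
Proof. rewrite /det3R; ring. Qed.

Lemma chart_scale_aux (R : comRingType) (c a w u x y : R) :
  c * a + c * w * x + c * u * y = c * (a + w * x + u * y).
Proof. ring. Qed.

Lemma tchart_scale c a w u k :
  tnth (chart (fun l => c * a l) (fun l => c * w l) (fun l => c * u l)) k = c%:MP * tnth (chart a w u) k.
Proof.
rewrite !tchart !mpolyCM; exact: chart_scale_aux.
Qed.

Lemma pmult_scale F p c : F \is 3.-homog -> c != 0 ->
  pmult_ge F (fun l => c * p l) 2 -> pmult_ge F p 2.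
Proof.
move=> hF hc h w u hd mon hmon.
have hd' : det3 (fun l => c * p l) (fun l => c * w l) (fun l => c * u l) != 0.
  by rewrite det3E det3R_scale mulf_neq0 // expf_neq0.
have := h _ _ hd' mon hmon.
rewrite (K4 hF) (@evm_ext _ _ _ _ (fun k => c%:MP * tnth (chart p w u) k)); last first.
  by move=> k; rewrite tchart_scale.
rewrite evm_scale3 -(K4 hF) -(rmorphXn (@mpolyC 2 C)) mcoeffCM => /eqP.
by rewrite mulf_eq0 expf_eq0 (negbTE hc) andbF /= => /eqP.
Qed.

Lemma pmult_weaken F p : pmult_ge F p 2 -> pmult_ge F p 1.
Proof. by move=> h w u hd mon hm; apply: h => //; apply: leq_trans hm _. Qed.

Lemma const_of_homog0 (F : {mpoly C[3]}) : F \is 0.-homog -> F != 0 -> F = (F@_0)%:MP.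
Proof. move=> h nF; apply: msize1_polyC; by rewrite (msize_homog h nF). Qed.

Lemma no_curve0 P m Z : (forall i, nz (P i)) -> Z <> [::] ->
  (forall q, List.In q Z -> valid_pt P q) -> (0 < m)%N -> ~ has_curve P 0 m Z.
Proof.
move=> hP hZ hv hm [F [[hF0 [nF _]] hq]].
have hF : F \is 0.-homog := hF0.
have cF := const_of_homog0 hF nF.
have nc : F@_0 != 0 by apply: contraNneq nF => e0; rewrite cF e0 mpolyC0.
case: Z hZ hv hq => [//|q0 Z'] _ hv hq.
have hq0 : List.In q0 (q0 :: Z') by left.
have h1 := hv _ hq0; have h2 := hq _ hq0; clear hv hq hq0.
move: h1 h2; case: q0 => [p|i w] /=.
- move=> [hp _] hpm; have [w [u hwu]] := basis_exists hp.
  have := hpm w u hwu 0%MM; rewrite mdeg0 => /(_ hm).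
  rewrite chart_c0 cF mevalC => e0; by rewrite e0 eqxx in nc.
- move=> hn hsm; have [k hk] := exists_e (hP i) hn.
  have := hsm _ hk 0%MM; rewrite mdeg0 addn0 => /(_ hm).
  rewrite bchart_c0 cF mevalC => e0; by rewrite e0 eqxx in nc.
Qed.
Lemma proj_eq_refl p : proj_eq p p.
Proof. exists 1; split; [exact: oner_neq0 | by move=> k; rewrite mul1r]. Qed.

Theorem theorem13 :
  exists G : {mpoly C[24]}, G != 0 /\
  forall P : 'I_8 -> vec, (forall i, nz (P i)) -> meval (coords P) G != 0 ->
  forall Z : seq spt, Z <> [::] -> (forall q, List.In q Z -> valid_pt P q) ->
  ((is_alpha P 1 Z 1 /\ is_alpha P 2 Z 1) <->
   exists Q : spt,
     valid_pt P Q /\ (forall q, List.In q Z -> pt_eq P q Q) /\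
     (forall i, ~ proj_eq (P i) (fpt P Q)) /\
     exists F : {mpoly C[3]},
       irreducible_cubic F /\ (forall i, meval (P i) F = 0) /\
       pmult_ge F (fpt P Q) 2).
Proof.
exists Gp; split; first exact: Gp_nz.
move=> P hP hG Z hZ hv; split.
- move=> [_ [[F [[hF [nF hPi]] hq]] _]].
  have hF3 : F \is 3.-homog := hF.
  have h0 : forall i, meval (P i) F = 0 by move=> i; apply: eval1 (hP i) (hPi i).
  have hOff : forall q, List.In q Z -> exists p, [/\ q = Off p, nz p,
      (forall i, ~ proj_eq (P i) p), meval p F = 0 & forall l, meval p (mderiv l F) = 0].
    move=> q hqZ; move: (hv q hqZ) (hq q hqZ); case: q {hqZ} => [p|i w] /=.
    + move=> [hp hpi] hm; have [f1 f2] := sing2 hF3 hp hm.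
      by exists p; split.
    + move=> hn hm; exfalso; apply/negP: nF; rewrite negbK; apply/eqP.
      apply: (gen10 hG (i := i)) => //.
      exact: (sing_exc hF3 (hP i) (h0 i) hn hm).
  case: Z hZ hv hq hOff => [//|q0 Z'] _ hv hq hOff.
  have hq0 : List.In q0 (q0 :: Z') by left.
  have [p0 [e0 hp0 hpi0 f0 g0]] := hOff _ hq0.
  exists (Off p0); split; first by split.
  split.
    move=> q hqZ; have [p [-> hp _ f g]] := hOff _ hqZ; rewrite /=.
    case: (Classical_Prop.classic (proj_eq p p0)) => // hnp; exfalso.
    exact: (two_sing hG hF3 nF h0 hp hp0 hnp f f0 g g0).
  split; first by move=> i /=; apply: hpi0.
  exists F; split.
    split => //; split => //. move=> G0 H0 eGH. exact: (irred_gen hG hF3 nF h0 eGH).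
  split => //.
  by have := hq _ hq0; rewrite e0.
- move=> [Q [hQv [hQZ [hQP [F [[hF3 [nF hirr]] [h0 hsing]]]]]]].
  case: Q hQv hQZ hQP hsing => [p0|i w] hQv hQZ hQP hsing; last first.
    by exfalso; apply: (hQP i); apply: proj_eq_refl.
  have hmult : forall q, List.In q Z -> exists p, q = Off p /\ pmult_ge F p 2.
    move=> q hqZ; move: (hQZ q hqZ); case: q {hqZ} => [p|j w] //= [c [hc hpc]].
    exists p; split => //.
    apply: (pmult_scale hF3 hc).
    have -> : (fun l => c * p l) = p0 by apply: functional_extensionality => l; rewrite hpc.
    exact: hsing.
  have hsec : section P 1 F.
    split => //; split => // i w u hd mon hmon.
    have -> : mon = 0%MM by apply/eqP; rewrite -mdeg_eq0; move: hmon; case: (mdeg mon).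
    by rewrite chart_c0 h0.
  split; split.
  + exists F; split => // q hqZ; have [p [-> hp]] := hmult q hqZ; exact: pmult_weaken.
  + move=> d; case: d => // _; exact: no_curve0.
  + exists F; split => // q hqZ; have [p [-> hp]] := hmult q hqZ; exact: hp.
  + move=> d; case: d => // _; exact: no_curve0.
Qed.
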